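(* Let $\eta>0$, $n\geq 2$, $G=(-\eta,1+\eta)\times\mathbb{R}^{n-1}$, $\pi:G\to(-\eta,1+\eta)$ the projection to the first coordinate, and $v_0:[0,1]\to G$, $v_0(t)=(t,0)$. For $v\in\Omega([0,1],G)$ write $a_v=\pi(v(0))$, $b_v=\pi(v(1))$. Then for every neighborhood $W_2$ of $v_0$ in $\Omega([0,1],G)$ there exists an open neighborhood $W_3\subseteq W_2$ of $v_0$ with the following property: for every $v\in W_3$ we have $a_v<b_v$ and there exists a section $\tilde v$ of $G|_{[a_v,b_v]}$, i.e. a map $\tilde v:[a_v,b_v]\to G$ of the form $\tilde v(s)=(s,\tilde u(s))$, which is a reparametrization of $v$, i.e. $v=\tilde v\circ\sigma$ for some $C^2$ diffeomorphism $\sigma:[0,1]\to[a_v,b_v]$ with $\sigma(0)=a_v$, $\sigma(1)=b_v$.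
   Context: $\Omega([0,1],G)$ denotes the space of $C^2$ immersions $[0,1]\to G$ with the $C^2$ topology. *)

(* Defs.v *)
From Stdlib Require Import Reals.
From Coquelicot Require Import Coquelicot.
Open Scope R_scope.

Definition C2fun (f : R -> R) : Prop :=
  (forall t, ex_derive f t) /\
  (forall t, ex_derive (Derive f) t) /\
  (forall t, continuous (Derive_n f 2) t).

(* A curve in R^n is given by its coordinate functions (coordinates k < n,
   coordinate 0 is the first one); curves are C^2 maps R -> R^n, of which
   only the restriction to [0,1] matters (a C^2 map on [0,1], with one-sided
   derivatives at the endpoints, is exactly the restriction of a C^2 map on R). *)
Definition curve := nat -> R -> R.

Definition C2curve (n : nat) (v : curve) : Prop :=
  forall k, (k < n)%nat -> C2fun (v k).

Definition Omega (n : nat) (eta : R) (v : curve) : Prop :=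
  C2curve n v /\
  (forall t, 0 <= t <= 1 -> - eta < v O t < 1 + eta) /\
  (forall t, 0 <= t <= 1 -> exists k, (k < n)%nat /\ Derive (v k) t <> 0).

Definition C2close (n : nat) (eps : R) (v w : curve) : Prop :=
  forall k j t, (k < n)%nat -> (j <= 2)%nat -> 0 <= t <= 1 ->
    Rabs (Derive_n (w k) j t - Derive_n (v k) j t) < eps.

Definition C2nbhd (n : nat) (eta : R) (W : curve -> Prop) (v : curve) : Prop :=
  exists eps, 0 < eps /\
    forall w, Omega n eta w -> C2close n eps v w -> W w.

Definition C2open (n : nat) (eta : R) (W : curve -> Prop) : Prop :=
  (forall v, W v -> Omega n eta v) /\
  (forall v, W v -> C2nbhd n eta W v).

Definition v0 : curve := fun k t => match k with O => t | _ => 0 end.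

Definition C2diffeo01 (sigma : R -> R) (a b : R) : Prop :=
  exists tau : R -> R,
    C2fun sigma /\ C2fun tau /\
    (forall t, 0 <= t <= 1 -> a <= sigma t <= b /\ tau (sigma t) = t) /\
    (forall s, a <= s <= b -> 0 <= tau s <= 1 /\ sigma (tau s) = s).

(* Main.v *)
Require Import Defs.
From Stdlib Require Import Reals Lra Lia Ranalysis5.
From Coquelicot Require Import Coquelicot.
Open Scope R_scope.

Definition glue (p : R) (f1 f2 : R -> R) (t : R) : R :=
  if Rle_dec t p then f1 t else f2 t.

Lemma glue_der p f1 f2 d1 d2 t :
  (forall t, derivable_pt_lim f1 t (d1 t)) ->
  (forall t, derivable_pt_lim f2 t (d2 t)) ->
  f1 p = f2 p -> d1 p = d2 p ->
  derivable_pt_lim (glue p f1 f2) t (glue p d1 d2 t).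
Proof.
  intros H1 H2 Ef Ed eps He.
  destruct (H1 t eps He) as [e1 He1]; destruct (H2 t eps He) as [e2 He2].
  destruct (Rtotal_order t p) as [Hlt|[Heq|Hgt]].
  - assert (Hp : 0 < Rmin e1 (p - t)) by (apply Rmin_pos; [apply cond_pos|lra]).
    exists (mkposreal _ Hp); intros h Hh0 Hh; simpl in Hh.
    assert (Hm1 := Rmin_l e1 (p - t)); assert (Hm2 := Rmin_r e1 (p - t)).
    unfold glue; destruct (Rle_dec (t + h) p) as [A|A];
      destruct (Rle_dec t p) as [B|B]; try (apply Rabs_def2 in Hh; lra).
    apply He1; auto; lra.
  - subst t.
    assert (Hp : 0 < Rmin e1 e2) by (apply Rmin_pos; apply cond_pos).
    exists (mkposreal _ Hp); intros h Hh0 Hh; simpl in Hh.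
    assert (Hm1 := Rmin_l e1 e2); assert (Hm2 := Rmin_r e1 e2).
    unfold glue; destruct (Rle_dec (p + h) p) as [A|A];
      destruct (Rle_dec p p) as [B|B]; try lra.
    + apply He1; auto; lra.
    + rewrite Ef, Ed; apply He2; auto; lra.
  - assert (Hp : 0 < Rmin e2 (t - p)) by (apply Rmin_pos; [apply cond_pos|lra]).
    exists (mkposreal _ Hp); intros h Hh0 Hh; simpl in Hh.
    assert (Hm1 := Rmin_l e2 (t - p)); assert (Hm2 := Rmin_r e2 (t - p)).
    unfold glue; destruct (Rle_dec (t + h) p) as [A|A];
      destruct (Rle_dec t p) as [B|B]; try (apply Rabs_def2 in Hh; lra).
    apply He2; auto; lra.
Qed.

Lemma glue_cont p f1 f2 t :
  (forall t, continuity_pt f1 t) -> (forall t, continuity_pt f2 t) ->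
  f1 p = f2 p -> continuity_pt (glue p f1 f2) t.
Proof.
  intros H1 H2 Ef eps He.
  destruct (H1 t eps He) as [e1 [Pe1 He1]]; destruct (H2 t eps He) as [e2 [Pe2 He2]].
  unfold R_dist in *.
  destruct (Rtotal_order t p) as [Hlt|[Heq|Hgt]].
  - exists (Rmin e1 (p - t)); split; [apply Rmin_pos; lra|].
    intros x [Hd Hx]; simpl in Hx; unfold R_dist in Hx.
    assert (Hm1 := Rmin_l e1 (p - t)); assert (Hm2 := Rmin_r e1 (p - t)).
    unfold glue; destruct (Rle_dec x p) as [A|A];
      destruct (Rle_dec t p) as [B|B]; try (apply Rabs_def2 in Hx; lra).
    apply He1; split; [exact Hd|simpl; unfold R_dist; lra].
  - subst t.
    exists (Rmin e1 e2); split; [apply Rmin_pos; lra|].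
    intros x [Hd Hx]; simpl in Hx; unfold R_dist in Hx.
    assert (Hm1 := Rmin_l e1 e2); assert (Hm2 := Rmin_r e1 e2).
    unfold glue; destruct (Rle_dec x p) as [A|A];
      destruct (Rle_dec p p) as [B|B]; try lra.
    + apply He1; split; [exact Hd|simpl; unfold R_dist; lra].
    + rewrite Ef; apply He2; split; [exact Hd|simpl; unfold R_dist; lra].
  - exists (Rmin e2 (t - p)); split; [apply Rmin_pos; lra|].
    intros x [Hd Hx]; simpl in Hx; unfold R_dist in Hx.
    assert (Hm1 := Rmin_l e2 (t - p)); assert (Hm2 := Rmin_r e2 (t - p)).
    unfold glue; destruct (Rle_dec x p) as [A|A];
      destruct (Rle_dec t p) as [B|B]; try (apply Rabs_def2 in Hx; lra).
    apply He2; split; [exact Hd|simpl; unfold R_dist; lra].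
Qed.

Definition C2data f df ddf :=
  (forall t, derivable_pt_lim f t (df t)) /\
  (forall t, derivable_pt_lim df t (ddf t)) /\
  (forall t, continuity_pt ddf t).

Lemma C2fun_data f : C2fun f -> C2data f (Derive f) (Derive (Derive f)).
Proof.
  intros [H1 [H2 H3]]; split; [|split].
  - intro t; apply is_derive_Reals, Derive_correct, H1.
  - intro t; apply is_derive_Reals, Derive_correct, H2.
  - intro t; apply continuity_pt_filterlim, (H3 t).
Qed.

Lemma data_C2fun f df ddf : C2data f df ddf -> C2fun f.
Proof.
  intros [H1 [H2 H3]].
  assert (E1 : forall t, Derive f t = df t).
  { intro t; apply is_derive_unique, is_derive_Reals, H1. }
  assert (E2 : forall t, Derive (Derive f) t = ddf t).
  { intro t; rewrite (Derive_ext _ _ t E1); apply is_derive_unique, is_derive_Reals, H2. }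
  split; [|split].
  - intro t; exists (df t); apply is_derive_Reals, H1.
  - intro t; exists (ddf t); apply (is_derive_ext df); [intro; now rewrite E1|].
    apply is_derive_Reals, H2.
  - intro t; simpl. apply (continuous_ext ddf); [intro; now rewrite E2|].
    apply continuity_pt_filterlim, H3.
Qed.

Lemma glue_data p f1 d1 dd1 f2 d2 dd2 :
  C2data f1 d1 dd1 -> C2data f2 d2 dd2 ->
  f1 p = f2 p -> d1 p = d2 p -> dd1 p = dd2 p ->
  C2data (glue p f1 f2) (glue p d1 d2) (glue p dd1 dd2).
Proof.
  intros [A1 [B1 C1]] [A2 [B2 C2]] E1 E2 E3; split; [|split]; intro t.
  - now apply glue_der.
  - now apply glue_der.
  - now apply glue_cont.
Qed.

Definition Ext p a b c t := a + b * (t - p) + c * (1 - cos (2 * (t - p))) / 4.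
Definition dExt p (b c : R) t := b + c * sin (2 * (t - p)) / 2.
Definition ddExt p (c : R) t := c * cos (2 * (t - p)).

Lemma Ext_data p a b c : C2data (Ext p a b c) (dExt p b c) (ddExt p c).
Proof.
  split; [|split]; intro t; unfold Ext, dExt, ddExt.
  - apply is_derive_Reals; auto_derive; auto; unfold Rminus; field.
  - apply is_derive_Reals; auto_derive; auto; unfold Rminus; field.
  - apply continuity_pt_filterlim, (ex_derive_continuous (fun t => c * cos (2 * (t - p)))); auto_derive; auto.
Qed.

Lemma Ext_p p a b c : Ext p a b c p = a /\ dExt p b c p = b /\ ddExt p c p = c.
Proof.
  unfold Ext, dExt, ddExt; replace (2 * (p - p)) with 0 by ring; rewrite cos_0, sin_0.
  split; [|split]; field.
Qed.

Lemma incr_bound g dg : (forall t, derivable_pt_lim g t (dg t)) ->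
  (forall t, 1/4 <= dg t) -> forall x y, x <= y -> (y - x)/4 <= g y - g x.
Proof.
  intros Hd Hb x y Hxy.
  destruct (Req_dec x y) as [->|Hne]; [lra|].
  destruct (MVT_gen g x y dg) as [c [_ Hc]].
  - intros; apply is_derive_Reals, Hd.
  - intros; apply derivable_continuous_pt; exists (dg x0); apply Hd.
  - rewrite Hc. specialize (Hb c). nra.
Qed.

Lemma inverse_data g dg ddg : C2data g dg ddg -> (forall t, 1/4 <= dg t) ->
  exists tau, C2data tau (fun s => / dg (tau s))
     (fun s => - (/ dg (tau s) * ddg (tau s)) / (dg (tau s)) ^ 2) /\
   (forall t, tau (g t) = t) /\ (forall s, g (tau s) = s).
Proof.
  intros [Hd [Hdd Hc]] Hb.
  assert (Hi := incr_bound g dg Hd Hb).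
  assert (Hs : forall x y, x < y -> g x < g y).
  { intros x y Hxy; specialize (Hi x y (Rlt_le _ _ Hxy)); lra. }
  assert (Hcg : continuity g).
  { intro x; apply derivable_continuous_pt; exists (dg x); apply Hd. }
  assert (Hsur : forall s, {t | g t = s}).
  { intro s. set (m := Rabs (s - g 0)).
    assert (H1 := Hi 0 (4 * m)). assert (H2 := Hi (- (4 * m)) 0).
    assert (Hm : 0 <= m) by apply Rabs_pos.
    assert (Hm1 : s - g 0 <= m) by (unfold m; apply RRle_abs).
    assert (Hm2 : g 0 - s <= m) by (unfold m; rewrite <- Rabs_Ropp;
        replace (g 0 - s) with (-(s - g 0)) by ring; apply RRle_abs).
    destruct (IVT_gen g (- (4 * m)) (4 * m) s Hcg) as [t [_ Ht]].
    - split; [apply Rle_trans with (g (- (4 * m))); [apply Rmin_l|] |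
              apply Rle_trans with (g (4 * m)); [|apply Rmax_r]].
      + assert (H2' := H2 ltac:(lra)); lra.
      + assert (H1' := H1 ltac:(lra)); lra.
    - exists t; exact Ht. }
  set (tau := fun s => proj1_sig (Hsur s)).
  assert (Hgt : forall s, g (tau s) = s) by (intro s; exact (proj2_sig (Hsur s))).
  assert (Htg : forall t, tau (g t) = t).
  { intro t. destruct (Rtotal_order (tau (g t)) t) as [A|[A|A]]; auto;
    apply Hs in A; rewrite Hgt in A; lra. }
  assert (Hmono : forall x y, x <= y -> tau x <= tau y).
  { intros x y Hxy. destruct (Rle_dec (tau x) (tau y)) as [A|A]; auto.
    assert (B : tau y < tau x) by lra. apply Hs in B. rewrite !Hgt in B. lra. }
  assert (Hct : forall s, continuity_pt tau s).
  { intro s.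
    apply (continuity_pt_recip_interv g tau (tau s - 1) (tau s + 1)).
    - lra.
    - intros; apply Hs; auto.
    - intros; unfold comp, id; apply Hgt.
    - intros x A B. apply Hmono in A. apply Hmono in B. rewrite Htg in A, B. lra.
    - intros; apply Hcg.
    - split; [rewrite <- (Hgt s) at 2| rewrite <- (Hgt s) at 1]; apply Hs; lra. }
  assert (Hdt : forall s, derivable_pt_lim tau s (/ dg (tau s))).
  { intro s.
    assert (Prf : forall a, tau (s - 1) <= a <= tau (s + 1) -> derivable_pt g a).
    { intros a _; exists (dg a); apply Hd. }
    assert (Pi : tau (s - 1) <= tau s <= tau (s + 1)) by (split; apply Hmono; lra).
    assert (K := derivable_pt_lim_recip_interv g tau (s - 1) (s + 1) s
      (fun a _ => exist _ (dg a) (Hd a)) (Hct s) ltac:(lra) ltac:(lra) Pi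
      ltac:(intros; unfold comp, id; apply Hgt)).
    simpl in K. replace (/ dg (tau s)) with (1 / dg (tau s)) by (unfold Rdiv; ring).
    apply K. specialize (Hb (tau s)); lra. }
  exists tau; split; [|split; auto]. split; [|split]; auto.
  - intro s. apply is_derive_Reals.
    apply (is_derive_inv (fun s => dg (tau s))).
    + apply (is_derive_comp dg tau).
      * apply is_derive_Reals, Hdd.
      * apply is_derive_Reals, Hdt.
    + specialize (Hb (tau s)); lra.
  - intro s.
    assert (Hcd : forall x, continuity_pt dg x).
    { intro x; apply derivable_continuous_pt; exists (ddg x); apply Hdd. }
    assert (Hh : continuity_pt (fun x => - (/ dg x * ddg x) / (dg x) ^ 2) (tau s)).
    { assert (Hn : dg (tau s) <> 0) by (specialize (Hb (tau s)); lra).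
      apply (continuity_pt_div (fun x => - (/ dg x * ddg x)) (fun x => (dg x) ^ 2)).
      - apply (continuity_pt_opp (fun x => (/ dg x * ddg x))).
        apply (continuity_pt_mult (fun x => / dg x) ddg); auto.
        apply (continuity_pt_inv dg); auto.
      - apply (continuity_pt_mult (fun x => dg x) (fun x => dg x * 1)); auto.
        apply (continuity_pt_mult (fun x => dg x) (fun x => 1)); auto.
        apply continuity_pt_const; intros ? ?; auto.
      - apply pow_nonzero; auto. }
    apply (continuity_pt_comp tau (fun x => - (/ dg x * ddg x) / (dg x) ^ 2)); auto.
Qed.

Lemma sin_lb a c x : 1/2 < a -> Rabs c < 1/2 -> 1/4 <= a + c * sin x / 2.
Proof.
  intros Ha Hc. destruct (SIN_bound x). apply Rabs_def2 in Hc. nra.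
Qed.

Lemma C2fun_id : C2fun (fun t => t).
Proof.
  apply (data_C2fun _ (fun _ => 1) (fun _ => 0)); split; [|split]; intro t.
  - apply is_derive_Reals; auto_derive; auto.
  - apply is_derive_Reals; auto_derive; auto.
  - apply continuity_pt_const; intros ? ?; auto.
Qed.

Lemma C2fun_0 : C2fun (fun t => 0).
Proof.
  apply (data_C2fun _ (fun _ => 0) (fun _ => 0)); split; [|split]; intro t.
  - apply is_derive_Reals; auto_derive; auto.
  - apply is_derive_Reals; auto_derive; auto.
  - apply continuity_pt_const; intros ? ?; auto.
Qed.

Lemma v0_d1 t : Derive_n (v0 O) 1 t = 1.
Proof. simpl. apply is_derive_unique; auto_derive; auto. Qed.

Lemma v0_d2 t : Derive_n (v0 O) 2 t = 0.
Proof.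
  simpl. rewrite (Derive_ext _ (fun _ => 1)).
  - apply Derive_const.
  - intro; apply is_derive_unique; auto_derive; auto.
Qed.

Lemma v0_Omega n eta : 0 < eta -> (2 <= n)%nat -> Omega n eta v0.
Proof.
  intros He Hn; split; [|split].
  - intros k _; destruct k; simpl; [apply C2fun_id|apply C2fun_0].
  - intros t Ht; simpl; lra.
  - intros t _; exists O; split; [lia|].
    assert (K := v0_d1 t); simpl in K; unfold v0; simpl; lra.
Qed.

Lemma reparam n eta v d : (2 <= n)%nat -> Omega n eta v -> 0 < d <= 1/2 -> C2close n d v0 v ->
      v O 0 < v O 1 /\
      exists (sigma : R -> R) (u : curve),
        C2diffeo01 sigma (v O 0) (v O 1) /\
        sigma 0 = v O 0 /\ sigma 1 = v O 1 /\
        forall t, 0 <= t <= 1 ->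
          v O t = sigma t /\
          forall k, (1 <= k < n)%nat -> v k t = u k (sigma t).
Proof.
  intros Hn [HC _] Hd Hcl.
  set (V := v O). set (D1 := Derive V). set (D2 := Derive D1).
  assert (HV : C2data V D1 D2) by (apply C2fun_data, HC; lia).
  assert (B1 : forall t, 0 <= t <= 1 -> 1/2 < D1 t).
  { intros t Ht. assert (K := Hcl O 1%nat t ltac:(lia) ltac:(lia) Ht).
    rewrite v0_d1 in K. apply Rabs_def2 in K.
    assert (K' : Derive_n (v O) 1 t = Derive (v O) t) by reflexivity. rewrite K' in K. unfold D1, V. lra. }
  assert (B2 : forall t, 0 <= t <= 1 -> Rabs (D2 t) < 1/2).
  { intros t Ht. assert (K := Hcl O 2%nat t ltac:(lia) ltac:(lia) Ht).
    rewrite v0_d2, Rminus_0_r in K.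
    assert (K' : Derive_n (v O) 2 t = Derive (Derive (v O)) t) by reflexivity. rewrite K' in K. unfold D2, D1, V. lra. }
  set (g := glue 0 (Ext 0 (V 0) (D1 0) (D2 0)) (glue 1 V (Ext 1 (V 1) (D1 1) (D2 1)))).
  set (dg := glue 0 (dExt 0 (D1 0) (D2 0)) (glue 1 D1 (dExt 1 (D1 1) (D2 1)))).
  set (ddg := glue 0 (ddExt 0 (D2 0)) (glue 1 D2 (ddExt 1 (D2 1)))).
  destruct (Ext_p 0 (V 0) (D1 0) (D2 0)) as [P1 [P2 P3]].
  destruct (Ext_p 1 (V 1) (D1 1) (D2 1)) as [Q1 [Q2 Q3]].
  assert (Hg : C2data g dg ddg).
  { apply glue_data.
    - apply Ext_data.
    - apply glue_data; auto; apply Ext_data.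
    - unfold glue; destruct (Rle_dec 0 1); [|lra]; auto.
    - unfold glue; destruct (Rle_dec 0 1); [|lra]; auto.
    - unfold glue; destruct (Rle_dec 0 1); [|lra]; auto. }
  assert (Hb : forall t, 1/4 <= dg t).
  { intro t; unfold dg, glue, dExt.
    destruct (Rle_dec t 0); [|destruct (Rle_dec t 1)].
    - apply sin_lb; [apply B1|apply B2]; lra.
    - assert (1/2 < D1 t) by (apply B1; lra); lra.
    - apply sin_lb; [apply B1|apply B2]; lra. }
  assert (gV : forall t, 0 <= t <= 1 -> g t = V t).
  { intros t Ht; unfold g, glue.
    destruct (Rle_dec t 0); [|destruct (Rle_dec t 1); lra].
    replace t with 0 by lra; auto. }
  destruct Hg as [Hgd Hgr].
  assert (Hi := incr_bound g dg Hgd Hb).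
  destruct (inverse_data g dg ddg (conj Hgd Hgr) Hb) as [tau [Ht [Htg Hgt]]].
  assert (E0 := gV 0 ltac:(lra)). assert (E1 := gV 1 ltac:(lra)).
  assert (H01 := Hi 0 1 ltac:(lra)).
  split; [unfold V in *; lra|].
  exists g, (fun k s => v k (tau s)).
  split; [|split; [|split]].
  - exists tau; split; [|split; [|split]].
    + exact (data_C2fun _ _ _ (conj Hgd Hgr)).
    + exact (data_C2fun _ _ _ Ht).
    + intros t Ht1. split; auto.
      assert (Hi1 := Hi 0 t ltac:(lra)); assert (Hi2 := Hi t 1 ltac:(lra)).
      fold V; lra.
    + intros s Hs. split; auto. fold V in Hs.
      split.
      * destruct (Rle_dec 0 (tau s)) as [A|A]; auto.
        assert (Hi1 := Hi (tau s) 0 ltac:(lra)). rewrite Hgt in Hi1. lra.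
      * destruct (Rle_dec (tau s) 1) as [A|A]; auto.
        assert (Hi1 := Hi 1 (tau s) ltac:(lra)). rewrite Hgt in Hi1. lra.
  - auto.
  - auto.
  - intros t Ht1; split.
    + symmetry; apply gV; auto.
    + intros k _; now rewrite Htg.
Qed.

Theorem proposition2p4 (eta : R) (n : nat) (heta : 0 < eta) (hn : (2 <= n)%nat)
  (W2 : curve -> Prop) (hW2 : C2nbhd n eta W2 v0) :
  exists W3 : curve -> Prop,
    C2open n eta W3 /\ W3 v0 /\ (forall v, W3 v -> W2 v) /\
    forall v, W3 v ->
      v O 0 < v O 1 /\
      exists (sigma : R -> R) (u : curve),
        C2diffeo01 sigma (v O 0) (v O 1) /\
        sigma 0 = v O 0 /\ sigma 1 = v O 1 /\
        forall t, 0 <= t <= 1 ->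
          v O t = sigma t /\
          forall k, (1 <= k < n)%nat -> v k t = u k (sigma t).
Proof.
  destruct hW2 as [eps0 [He0 HW2]].
  set (eps := Rmin eps0 (1/2)).
  assert (Hm1 : eps <= eps0) by apply Rmin_l.
  assert (Hm2 : eps <= 1/2) by apply Rmin_r.
  assert (Hep : 0 < eps) by (apply Rmin_pos; lra).
  exists (fun v => Omega n eta v /\ exists d, 0 < d < eps /\ C2close n d v0 v).
  split; [|split; [|split]].
  - split; [intros v [H _]; exact H|].
    intros v [Hv [d [Hd Hc]]].
    exists ((eps - d) / 2); split; [lra|].
    intros w Hw Hc'. split; auto.
    exists (d + (eps - d) / 2); split; [lra|].
    intros k j t Hk Hj Ht.
    specialize (Hc k j t Hk Hj Ht); specialize (Hc' k j t Hk Hj Ht).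
    replace (Derive_n (w k) j t - Derive_n (v0 k) j t) with
      ((Derive_n (w k) j t - Derive_n (v k) j t) + (Derive_n (v k) j t - Derive_n (v0 k) j t)) by ring.
    eapply Rle_lt_trans; [apply Rabs_triang|]. lra.
  - split; [apply v0_Omega; auto|].
    exists (eps / 2); split; [lra|].
    intros k j t _ _ _. rewrite Rminus_diag, Rabs_R0. lra.
  - intros v [Hv [d [Hd Hc]]]. apply HW2; auto.
    intros k j t Hk Hj Ht. specialize (Hc k j t Hk Hj Ht). lra.
  - intros v [Hv [d [Hd Hc]]]. apply (reparam n eta v d); auto. lra.
Qed.
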